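(* For every $n\ge 1$, every orientation $\overrightarrow{K_{1,n}}$ of the star $K_{1,n}$ is $\{0,1\}$-antimagic.
   Context: An oriented graph $\overrightarrow{G}$ is a directed graph obtained from a simple undirected graph by giving each edge one direction. For vertices $u,v$, $d(u,v)$ is the length of a shortest directed path from $u$ to $v$ ($d(u,u)=0$, and $d(u,v)=\infty$ if there is no such path). Let $\partial=\max\{d(u,v)<\infty : u,v\in V(\overrightarrow{G})\}$. A distance set is a nonempty $D\subseteq\{0,1,\dots,\partial\}$. The $D$-neighborhood of $u$ is $N_D(u)=\{v : d(u,v)\in D\}$. For a bijection $f:V(\overrightarrow{G})\to\{1,\dots,|V(\overrightarrow{G})|\}$, the $D$-weight of $u$ is $\omega_D(u)=\sum_{v\in N_D(u)} f(v)$. $\overrightarrow{G}$ is $D$-antimagic if $D\subseteq\{0,\dots,\partial\}$ and there is such a bijection $f$ with all $D$-weights pairwise distinct. *)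

(* Defs.v *)
From mathcomp Require Import all_boot.
Set Implicit Arguments. Unset Strict Implicit. Unset Printing Implicit Defensive.

Definition oriented (V : finType) (arc : rel V) : Prop :=
  (forall u, ~~ arc u u) /\ (forall u v, arc u v -> ~~ arc v u).

Fixpoint walk_k (V : finType) (arc : rel V) (k : nat) (u v : V) : bool :=
  match k with
  | 0 => u == v
  | k'.+1 => [exists w, arc u w && walk_k arc k' w v]
  end.

Definition dist_eq (V : finType) (arc : rel V) (u v : V) (k : nat) : bool :=
  walk_k arc k u v && [forall j : 'I_k, ~~ walk_k arc j u v].

(* k <= partial, where partial = max of the finite distances *)
Definition le_diam (V : finType) (arc : rel V) (k : nat) : Prop :=
  exists u v d, dist_eq arc u v d /\ k <= d.

Definition distance_set (V : finType) (arc : rel V) (D : pred nat) : Prop :=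
  (exists k, D k) /\ (forall k, D k -> le_diam arc k).

(* N_D(u) as a boolean predicate; finite distances are always < #|V|
   (shortest walks are paths), so quantifying over 'I_#|V| is exhaustive *)
Definition inNbD (V : finType) (arc : rel V) (D : pred nat) (u v : V) : bool :=
  [exists k : 'I_#|V|, D k && dist_eq arc u v k].

(* D-antimagic: D is a distance set and there is a bijective labelling
   f : V -> {1..|V|} (here encoded as a bijection onto 'I_#|V|, label = val + 1)
   with pairwise distinct D-weights *)
Definition D_antimagic (V : finType) (arc : rel V) (D : pred nat) : Prop :=
  distance_set arc D /\
  exists f : V -> 'I_#|V|, bijective f /\
    injective (fun u : V =>
      \sum_(v : V | inNbD arc D u v) (val (f v)).+1).

(* orientation of the star K_{1,n}: vertex ord0 is the centre, vertices
   1..n are leaves; o i = true means arc centre -> leaf (i+1), false means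
   leaf (i+1) -> centre. *)
Definition star_arc (n : nat) (o : 'I_n -> bool) : rel 'I_n.+1 :=
  fun u v =>
    [exists i : 'I_n,
       ((u == ord0) && (v == lift ord0 i) && o i)
    || ((u == lift ord0 i) && (v == ord0) && ~~ o i)].

(* Main.v *)
Require Import Defs.
From mathcomp Require Import all_boot.
From mathcomp Require Import zify.

Section Star.
Variables (n : nat) (o : 'I_n -> bool).

Let arc := star_arc o.

Lemma arc00 : arc ord0 ord0 = false.
Proof.
apply/existsP => -[i /orP [/andP [/andP [_ /eqP H] _]|/andP [/andP [/eqP H _] _]]].
- by have := neq_lift ord0 i; rewrite -H eqxx.
- by have := neq_lift ord0 i; rewrite -H eqxx.
Qed.

Lemma arc0l i : arc ord0 (lift ord0 i) = o i.
Proof.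
apply/existsP/idP.
- move=> [j /orP [/andP [/andP [_ /eqP H] Hj]|/andP [/andP [/eqP H _] _]]].
  by move: H Hj => /lift_inj ->.
  by have := neq_lift ord0 j; rewrite -H eqxx.
- by move=> oi; exists i; rewrite !eqxx oi.
Qed.

Lemma arcl0 i : arc (lift ord0 i) ord0 = ~~ o i.
Proof.
apply/existsP/idP.
- move=> [j /orP [/andP [/andP [/eqP H _] _]|/andP [/andP [/eqP H _] Hj]]].
  by have := neq_lift ord0 i; rewrite H eqxx.
  by move: H Hj => /lift_inj ->.
- by move=> oi; exists i; rewrite !eqxx oi orbT.
Qed.

Lemma arcll i j : arc (lift ord0 i) (lift ord0 j) = false.
Proof.
apply/existsP => -[k /orP [/andP [/andP [/eqP H _] _]|/andP [/andP [_ /eqP H] _]]].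
- by have := neq_lift ord0 i; rewrite H eqxx.
- by have := neq_lift ord0 j; rewrite H eqxx.
Qed.

Lemma arc_irr u : arc u u = false.
Proof. by case: (unliftP ord0 u) => [i ->|->]; rewrite ?arcll ?arc00. Qed.

Lemma walk0 u v : walk_k arc 0 u v = (u == v).
Proof. by []. Qed.

Lemma walk1 u v : walk_k arc 1 u v = arc u v.
Proof.
apply/existsP/idP => [[w /andP [H /eqP <-]] //|H]; by exists v; rewrite H eqxx.
Qed.

Lemma inNb u v : 1 <= n ->
  inNbD arc (fun k => (k == 0) || (k == 1)) u v = (u == v) || arc u v.
Proof.
move=> n1; apply/existsP/idP.
- move=> [k /andP [/orP [/eqP Hk|/eqP Hk] /andP [W _]]].
    by move: W; rewrite Hk walk0 => ->.
  by move: W; rewrite Hk walk1 => ->; rewrite orbT.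
- case/orP => H.
  + have h0 : 0 < #|'I_n.+1| by rewrite card_ord.
    exists (Ordinal h0); rewrite /= /dist_eq /= H /=.
    by apply/forallP => -[].
  + have h1 : 1 < #|'I_n.+1| by rewrite card_ord; lia.
    exists (Ordinal h1); rewrite /= /dist_eq walk1 H /=.
    apply/forallP => -[[|j] hj] //=.
    apply/eqP => E; by rewrite E arc_irr in H.
Qed.

Definition key (i : 'I_n) := o i * n + i.

Lemma key_inj : injective key.
Proof.
move=> i j; rewrite /key => H; apply/val_inj => /=.
have hi := ltn_ord i; have hj := ltn_ord j.
by case: (o i) (o j) H => -[] /=; lia.
Qed.

Definition rk (i : 'I_n) := #|[pred j : 'I_n | key j < key i]|.

Lemma rk_lt i : rk i < n.
Proof.
have : #|[pred j : 'I_n | key j < key i]| <= #|predC1 i|.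
  apply: subset_leq_card; apply/subsetP => j; rewrite !inE => H.
  by apply/eqP => E; rewrite E ltnn in H.
rewrite cardC1 card_ord /rk => H.
have := ltn_ord i; lia.
Qed.

Lemma rk_mono i j : key i < key j -> rk i < rk j.
Proof.
move=> H; apply: proper_card; rewrite properE; apply/andP; split.
  by apply/subsetP => k; rewrite !inE => Hk; apply: ltn_trans Hk H.
by apply/subsetP => /(_ i); rewrite !inE H ltnn => /(_ isT).
Qed.

Lemma rk_inj : injective rk.
Proof.
move=> i j H; apply: key_inj.
case: (ltngtP (key i) (key j)) => // /rk_mono; by rewrite H ltnn.
Qed.

Definition g (u : 'I_n.+1) : 'I_n.+1 :=
  match unlift ord0 u with Some i => inord (rk i) | None => ord_max end.

Lemma g0 : val (g ord0) = n.
Proof. by rewrite /g unlift_none. Qed.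

Lemma gl i : val (g (lift ord0 i)) = rk i.
Proof. rewrite /g liftK /= inordK //; have := rk_lt i; lia. Qed.

Lemma g_inj : injective g.
Proof.
move=> u v.
case: (unliftP ord0 u) => [i ->|->]; case: (unliftP ord0 v) => [j ->|->] // => H;
  have := congr1 val H; rewrite ?gl ?g0.
- by move/rk_inj => ->.
- by have := rk_lt i; lia.
- by have := rk_lt j; lia.
Qed.


Lemma lz i : (lift ord0 i == ord0 :> 'I_n.+1) = false.
Proof. by rewrite eq_sym (negbTE (neq_lift _ _)). Qed.
Lemma zl i : (ord0 == lift ord0 i :> 'I_n.+1) = false.
Proof. by rewrite (negbTE (neq_lift _ _)). Qed.

Definition W u := \sum_(v | (u == v) || arc u v) (g v).+1.

Lemma Wout i : o i -> W (lift ord0 i) = (rk i).+1.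
Proof.
move=> oi; rewrite /W (eq_bigl (pred1 (lift ord0 i))) ?big_pred1_eq ?gl //.
move=> v; case: (unliftP ord0 v) => [j ->|->]; rewrite ?arcll ?arcl0 ?oi /= ?orbF.
  by rewrite eq_sym.
by rewrite ?lz ?zl.
Qed.

Lemma Win i : ~~ o i -> W (lift ord0 i) = (rk i).+1 + n.+1.
Proof.
move=> oi; rewrite /W (bigD1 (lift ord0 i)) ?eqxx //= gl.
rewrite (eq_bigl (pred1 ord0)) ?big_pred1_eq ?g0 //.
move=> v; case: (unliftP ord0 v) => [j ->|->]; rewrite ?arcll ?arcl0 ?oi /=.
  by rewrite orbF [X in X && _]eq_sym andbN lz.
by rewrite eqxx.
Qed.

Lemma Wc_none : (forall j, ~~ o j) -> W ord0 = n.+1.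
Proof.
move=> no; rewrite /W (eq_bigl (pred1 ord0)) ?big_pred1_eq ?g0 //.
move=> v; case: (unliftP ord0 v) => [j ->|->]; rewrite ?arc0l ?arc00 /=.
  by rewrite (negbTE (no j)) lz.
by rewrite eqxx.
Qed.

Lemma Wc_ge j : o j -> n.+1 + (rk j).+1 <= W ord0.
Proof.
move=> oj; rewrite /W (bigD1 ord0) ?eqxx //= g0 leq_add2l.
rewrite (bigD1 (lift ord0 j)) /= ?gl ?leq_addr //.
by rewrite arc0l oj.
Qed.


Lemma in_out i j : ~~ o i -> o j -> rk i < rk j.
Proof.
move=> /negbTE oi oj; apply: rk_mono; rewrite /key oi oj /=.
have := ltn_ord i; lia.
Qed.

Lemma W_leaf_c i : W (lift ord0 i) != W ord0.
Proof.
have ri := rk_lt i.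
case: (pickP o) => [j oj | no].
  have := Wc_ge j oj; have rj := rk_lt j.
  case: (boolP (o i)) => oi; rewrite ?(Wout i oi) ?(Win i oi).
    lia.
  have := in_out i j oi oj; lia.
rewrite Wc_none; last by move=> j; rewrite no.
case: (boolP (o i)) => oi; rewrite ?(Wout i oi) ?(Win i oi); lia.
Qed.

Lemma W_inj : injective W.
Proof.
move=> u v; case: (unliftP ord0 u) => [i ->|->]; case: (unliftP ord0 v) => [j ->|->] //.
- have ri := rk_lt i; have rj := rk_lt j.
  case: (boolP (o i)) => oi; rewrite ?(Wout i oi) ?(Win i oi);
  case: (boolP (o j)) => oj; rewrite ?(Wout j oj) ?(Win j oj);
  try lia; move=> H; (have -> : i = j by apply: rk_inj; lia); by [].
- by move=> H; have := W_leaf_c i; rewrite H eqxx.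
- by move=> H; have := W_leaf_c j; rewrite H eqxx.
Qed.

End Star.

Theorem mainTheorem2 (n : nat) (o : 'I_n -> bool) :
  1 <= n -> D_antimagic (star_arc o) (fun k => (k == 0) || (k == 1)).
Proof.
move=> n1; split.
- split; first by exists 0.
  move=> k /orP [/eqP ->|/eqP ->].
    by exists ord0, ord0, 0; split => //; rewrite /dist_eq /=; apply/forallP => -[].
  set i0 : 'I_n := Ordinal n1.
  case: (boolP (o i0)) => oi.
    exists ord0, (lift ord0 i0), 1; split => //.
    by rewrite /dist_eq walk1 arc0l oi /=; apply/forallP => -[[|j] hj] //=; rewrite zl.
  exists (lift ord0 i0), ord0, 1; split => //.
  by rewrite /dist_eq walk1 arcl0 oi /=; apply/forallP => -[[|j] hj] //=; rewrite lz.
- set E := esym (card_ord n.+1).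
  exists (fun u => cast_ord E (g n o u)); split.
    apply: (@bij_comp _ _ _ (cast_ord E) (g n o)).
      by exists (cast_ord (esym E)); [apply: cast_ordK | apply: cast_ordKV].
    exact: injF_bij (@g_inj n o).
  move=> u v H; apply: (@W_inj n o).
  have HW : forall w, \sum_(v | inNbD (star_arc o) (fun k => (k == 0) || (k == 1)) w v)
     (val (cast_ord E (g n o v))).+1 = W n o w.
    by move=> w; apply: eq_big => // x; rewrite inNb.
  by rewrite -!HW.
Qed.
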